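(* Let $r>1$, $p\in(0,1)$, $q=1-p$, and $z>1$. Let $g_z:\mathbb{Z}_+\to\mathbb{R}$ be defined by $g_z(0)=0$ and, for $k\ge 1$, $$g_z(k)=-\sum_{j=k}^{\infty}\frac{r(r+1)\cdots(r+j-1)}{r(r+1)\cdots(r+k-1)}\,\frac{(k-1)!}{j!}\,q^{j-k}\Big[(j-z)^+-\mathbb{E}[(\mathrm{N}_{r,p}-z)^+]\Big].$$ Then for every integer $k\ge 1$, $$|\Delta g_z(k)|\le\begin{cases}\frac{1}{z}\left(2p^{-(r+1)}-p^{-1}\right) & \text{if } k\ge z,\\[2pt] \frac{1}{z}\left((1+q^{-1})p^{-(r+2)}-p^{-2}\right) & \text{if } 2\le k<z,\\[2pt] \frac{r+1}{z}\left(2p^{-(r+2)}-p^{-2}\right) & \text{if } k=1.\end{cases}$$ In particular, for all $k\ge1$, $|\Delta g_z(k)|\le \vartheta_{r,p,z}:=\frac{r+1}{z}\left((1+q^{-1})p^{-(r+2)}-p^{-2}\right)$.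
   Context: $\mathbb{Z}_+=\{0,1,2,\ldots\}$. $x^+=\max\{x,0\}$. $\mathrm{N}_{r,p}$ denotes a negative binomial random variable with $\mathbb{P}(\mathrm{N}_{r,p}=k)=\binom{r+k-1}{k}p^rq^k=\frac{\Gamma(r+k)}{k!\,\Gamma(r)}p^rq^k$ for $k\in\mathbb{Z}_+$, where $r>1$ and $q=1-p\in(0,1)$. $\Delta g(k)=g(k+1)-g(k)$ is the forward difference. *)

(* Defs.v *)
From Stdlib Require Import Reals Lra Arith Factorial.
From Coquelicot Require Import Coquelicot.
Open Scope R_scope.

(* rising factorial r(r+1)...(r+n-1); rising r 0 = 1.
   Note Gamma(r+k)/Gamma(r) = rising r k. *)
Fixpoint rising (r : R) (n : nat) : R :=
  match n with
  | O => 1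
  | S m => rising r m * (r + INR m)
  end.

Definition pospart (x : R) : R := Rmax x 0.

Definition negbin_pmf (r p : R) (k : nat) : R :=
  rising r k / INR (fact k) * Rpower p r * (1 - p) ^ k.

Definition negbin_Epos (r p z : R) : R :=
  Series (fun k => negbin_pmf r p k * pospart (INR k - z)).

Definition g_z (r p z : R) (k : nat) : R :=
  match k with
  | O => 0
  | S _ =>
    - Series (fun i : nat =>
        let j := (k + i)%nat in
        rising r j / rising r k * INR (fact (k - 1)) / INR (fact j)
        * (1 - p) ^ (j - k)
        * (pospart (INR j - z) - negbin_Epos r p z))
  end.

Definition fdiff (g : nat -> R) (k : nat) : R := g (S k) - g k.

(* Main.v *)
Require Import Defs.
From Stdlib Require Import Reals Lra Lia Psatz Arith Factorial.
From Coquelicot Require Import Coquelicot.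
Open Scope R_scope.

Definition cc (r : R) (n : nat) : R := rising r n / INR (fact n).
Definition uu (r q : R) (n : nat) : R := cc r n * q ^ n.

Lemma rising_pos r n : 0 < r -> 0 < rising r n.
Proof. intros hr; induction n; simpl. lra. apply Rmult_lt_0_compat; auto. pose proof (pos_INR n); lra. Qed.

Lemma INR_fact_pos n : 0 < INR (fact n).
Proof. apply lt_0_INR, lt_O_fact. Qed.

Lemma uu_pos r q n : 0 < r -> 0 < q -> 0 < uu r q n.
Proof. intros; unfold uu, cc. apply Rmult_lt_0_compat; [|apply pow_lt; auto].
  apply Rdiv_lt_0_compat; [apply rising_pos; auto | apply INR_fact_pos]. Qed.

Lemma uu_rec r q n : uu r q (S n) * INR (S n) = q * (r + INR n) * uu r q n.
Proof. unfold uu, cc. simpl rising. rewrite fact_simpl, mult_INR.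
  pose proof (INR_fact_pos n). assert (INR (S n) <> 0) by (rewrite S_INR; pose proof (pos_INR n); lra).
  simpl pow. field. lra. Qed.

Lemma uu_0 r q : uu r q 0 = 1.
Proof. unfold uu, cc; simpl; field. Qed.

Lemma uu_S r q n : uu r q (S n) = q * (r + INR n) / (INR n + 1) * uu r q n.
Proof. pose proof (uu_rec r q n). rewrite S_INR in H. pose proof (pos_INR n).
  apply (Rmult_eq_reg_r (INR n + 1)); [|lra]. rewrite H. field. lra. Qed.

Lemma Series_nonneg a : (forall n, 0 <= a n) -> ex_series a -> 0 <= Series a.
Proof. intros H He. replace 0 with (Series (fun n => 0 * a n)).
  apply Series_le; auto. intros n; specialize (H n); lra.
  rewrite Series_scal_l; ring. Qed.

Lemma lim_inv_n1 : is_lim_seq (fun n => / (INR n + 1)) 0.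
Proof.
  assert (H : is_lim_seq (fun n => INR n + 1) p_infty).
  { apply is_lim_seq_ext with (fun n => INR (S n)). intros; rewrite S_INR; auto.
    apply (is_lim_seq_incr_1 INR p_infty). apply is_lim_seq_INR. }
  apply (is_lim_seq_inv _ _ H). discriminate.
Qed.

Definition bb r q n := (INR n + 1) ^ 2 * uu r q n.

Lemma ex_bb r q : 1 < r -> 0 < q < 1 -> ex_series (bb r q).
Proof.
  intros hr hq.
  apply ex_series_Rabs.
  apply (ex_series_DAlembert _ q). lra.
  { intros n. unfold bb. pose proof (uu_pos r q n ltac:(lra) ltac:(lra)). pose proof (pos_INR n).
    apply Rgt_not_eq. apply Rmult_lt_0_compat; auto. apply pow_lt; lra. }
  apply is_lim_seq_ext with (fun n => q * ((1 + / (INR n + 1)) ^ 2 * (1 + (r - 1) * / (INR n + 1)))).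
  { intros n. unfold bb. rewrite uu_S. pose proof (uu_pos r q n ltac:(lra) ltac:(lra)). pose proof (pos_INR n).
    rewrite S_INR. rewrite Rabs_pos_eq. field. split; lra.
    apply Rmult_le_pos; [|apply Rlt_le, Rinv_0_lt_compat].
    apply Rmult_le_pos; [apply pow_le; lra|]. apply Rmult_le_pos; [|lra].
    apply Rmult_le_pos; [|apply Rlt_le, Rinv_0_lt_compat; lra].
    apply Rmult_le_pos; lra.
    apply Rmult_lt_0_compat; [apply pow_lt; lra|auto]. }
  replace (Finite q) with (Rbar_mult q ((1 + 0)^2 * (1 + (r-1) * 0))) by (simpl; f_equal; ring).
  apply is_lim_seq_scal_l.
  apply is_lim_seq_mult'.
  - simpl. apply is_lim_seq_mult'. apply is_lim_seq_plus'. apply is_lim_seq_const. apply lim_inv_n1.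
    apply is_lim_seq_mult'. apply is_lim_seq_plus'. apply is_lim_seq_const. apply lim_inv_n1. apply is_lim_seq_const.
  - apply is_lim_seq_plus'. apply is_lim_seq_const.
    apply is_lim_seq_mult'. apply is_lim_seq_const. apply lim_inv_n1.
Qed.

Lemma cc_rec r n : cc r (S n) * INR (S n) = (r + INR n) * cc r n.
Proof. unfold cc. simpl rising. rewrite fact_simpl, mult_INR.
  pose proof (INR_fact_pos n). assert (INR (S n) <> 0) by (rewrite S_INR; pose proof (pos_INR n); lra).
  field. lra. Qed.

Fixpoint SP r N t := match N with 0%nat => 1 | S M => SP r M t + cc r (S M) * t ^ (S M) end.
Fixpoint DP r N t := match N with 0%nat => 0 | S M => DP r M t + cc r (S M) * INR (S M) * t ^ M end.

Lemma SP_sum r q N : SP r N q = sum_f_R0 (uu r q) N.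
Proof. induction N; simpl. unfold uu, cc; simpl; field. rewrite IHN. unfold uu. simpl. ring. Qed.

Lemma SP_0 r N : SP r N 0 = 1.
Proof. induction N; simpl; auto. rewrite IHN. ring. Qed.

Lemma SP_der r N t : is_derive (SP r N) t (DP r N t).
Proof. induction N; simpl.
  - auto_derive; auto.
  - apply (is_derive_plus (SP r N) (fun t => cc r (S N) * t ^ S N)). auto.
    auto_derive; auto. destruct N; simpl; ring.
Qed.

Lemma SP_id r N t : (1 - t) * DP r N t - r * SP r N t = - (cc r (S N) * INR (S N) * t ^ N).
Proof. induction N.
  - simpl. unfold cc. simpl. field.
  - change (DP r (S N) t) with (DP r N t + cc r (S N) * INR (S N) * t ^ N).
    change (SP r (S N) t) with (SP r N t + cc r (S N) * t ^ S N).
    assert (E : cc r (S (S N)) * INR (S (S N)) = (r + INR (S N)) * cc r (S N)) by apply cc_rec.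
    replace ((1 - t) * (DP r N t + cc r (S N) * INR (S N) * t ^ N) - r * (SP r N t + cc r (S N) * t ^ S N))
      with (((1 - t) * DP r N t - r * SP r N t) + (1-t) * cc r (S N) * INR (S N) * t ^ N - r * cc r (S N) * t ^ S N) by ring.
    rewrite IHN, E. simpl pow. rewrite (S_INR N). ring.
Qed.

Lemma Rpower_1m_der r t : t < 1 -> is_derive (fun t => Rpower (1 - t) r) t (- (r * Rpower (1 - t) (r - 1))).
Proof. intros ht.
  apply is_derive_Reals.
  replace (- (r * Rpower (1 - t) (r - 1))) with ((r * Rpower (1 - t) (r - 1)) * (-1)) by ring.
  apply (derivable_pt_lim_comp (fun t => 1 - t) (fun x => Rpower x r)).
  - apply (proj1 (is_derive_Reals _ _ _)). auto_derive; auto.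
  - apply derivable_pt_lim_power. lra.
Qed.

Lemma binom_partial r q N : 1 <= r -> 0 < q < 1 ->
  0 <= 1 - Rpower (1 - q) r * sum_f_R0 (uu r q) N <= INR (S N) * uu r q (S N).
Proof.
  intros hr hq. rewrite <- SP_sum.
  set (f := fun t => Rpower (1 - t) r * SP r N t).
  set (df := fun t => - (Rpower (1 - t) (r - 1) * (cc r (S N) * INR (S N) * t ^ N))).
  assert (Hd : forall t, t < 1 -> is_derive f t (df t)).
  { intros t ht.
    assert (H : is_derive f t ((-(r*Rpower(1-t)(r-1))) * SP r N t + Rpower (1-t) r * DP r N t)).
    { unfold f. apply (is_derive_mult (fun t => Rpower (1 - t) r) (SP r N)). apply Rpower_1m_der; auto. apply SP_der.
      intros; simpl; unfold mult; simpl; ring. }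
    replace (df t) with ((-(r*Rpower(1-t)(r-1))) * SP r N t + Rpower (1-t) r * DP r N t). exact H.
    unfold df. replace (cc r (S N) * INR (S N) * t ^ N) with (- ((1 - t) * DP r N t - r * SP r N t)) by (rewrite SP_id; ring).
    replace (Rpower (1 - t) r) with (Rpower (1 - t) (r - 1) * (1 - t)).
    ring. rewrite <- (Rpower_1 (1 - t)) at 2 by lra. rewrite <- Rpower_plus. f_equal. ring. }
  destruct (MVT_gen f 0 q df) as [c [Hc Hm]].
  { intros x Hx. apply Hd. rewrite Rmax_right in Hx; lra. }
  { intros x Hx. rewrite Rmax_right in Hx by lra. apply continuity_pt_filterlim.
    apply (ex_derive_continuous f x). eexists. apply Hd. lra. }
  rewrite Rmin_left in Hc by lra. rewrite Rmax_right in Hc by lra.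
  assert (F0 : f 0 = 1). { unfold f. rewrite SP_0. replace (1 - 0) with 1 by ring. unfold Rpower. rewrite ln_1, Rmult_0_r, exp_0. ring. }
  unfold f in Hm, F0. rewrite F0 in Hm. unfold df in Hm.
  assert (E1 : 1 - Rpower (1 - q) r * SP r N q = Rpower (1 - c) (r - 1) * (cc r (S N) * INR (S N) * c ^ N) * q) by lra.
  rewrite E1.
  assert (P1 : 0 < Rpower (1 - c) (r - 1)) by (unfold Rpower; apply exp_pos).
  assert (P2 : Rpower (1 - c) (r - 1) <= 1).
  { apply Rle_trans with (Rpower 1 (r - 1)). apply Rle_Rpower_l; lra.
    unfold Rpower; rewrite ln_1, Rmult_0_r, exp_0; lra. }
  assert (P3 : 0 < cc r (S N)) by (unfold cc; apply Rdiv_lt_0_compat; [apply rising_pos; lra|apply INR_fact_pos]).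
  assert (P4 : 0 <= c ^ N <= q ^ N) by (split; [apply pow_le; lra| apply pow_incr; lra]).
  assert (P5 : 0 < INR (S N)) by (apply lt_0_INR; lia).
  unfold uu. simpl pow.
  split.
  - apply Rmult_le_pos; [|lra]. apply Rmult_le_pos; [lra|]. apply Rmult_le_pos; [|lra]. apply Rmult_le_pos; lra.
  - assert (cc r (S N) * INR (S N) * c ^ N * q <= cc r (S N) * INR (S N) * q ^ N * q).
    { apply Rmult_le_compat_r; [lra|]. apply Rmult_le_compat_l; [|lra]. apply Rmult_le_pos; lra. }
    assert (0 <= cc r (S N) * INR (S N) * c ^ N * q) by (apply Rmult_le_pos; [|lra]; apply Rmult_le_pos; [|lra]; apply Rmult_le_pos; lra).
    nra.
Qed.

Lemma ex_dom r q (a : nat -> R) K : 1 < r -> 0 < q < 1 ->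
  (forall n, Rabs (a n) <= K * bb r q n) -> ex_series a.
Proof. intros hr hq H. apply (ex_series_le a (fun n => K * bb r q n)).
  intros n. apply H. apply (ex_series_scal_l K (bb r q)). apply ex_bb; auto. Qed.

Lemma ex_w r q (w : nat -> R) : 1 < r -> 0 < q < 1 ->
  (forall n, Rabs (w n) <= (INR n + 1) ^ 2) -> ex_series (fun n => w n * uu r q n).
Proof. intros hr hq H. apply (ex_dom r q _ 1); auto. intros n. unfold bb.
  pose proof (uu_pos r q n ltac:(lra) ltac:(lra)). rewrite Rabs_mult, (Rabs_pos_eq (uu r q n)) by lra.
  specialize (H n). nra. Qed.

Lemma ex_uu r q : 1 < r -> 0 < q < 1 -> ex_series (uu r q).
Proof. intros. apply (ex_series_ext (fun n => 1 * uu r q n)). intros n; apply Rmult_1_l.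
  apply (ex_w r q (fun _ => 1)); auto. intros n. pose proof (pos_INR n). rewrite Rabs_pos_eq by lra. nra. Qed.

Lemma ex_nuu r q : 1 < r -> 0 < q < 1 -> ex_series (fun n => INR n * uu r q n).
Proof. intros. apply (ex_w r q (fun n => INR n)); auto. intros n. pose proof (pos_INR n). rewrite Rabs_pos_eq by lra. nra. Qed.

Lemma ex_n2uu r q : 1 < r -> 0 < q < 1 -> ex_series (fun n => INR n ^ 2 * uu r q n).
Proof. intros. apply (ex_w r q (fun n => INR n ^ 2)); auto. intros n. pose proof (pos_INR n). rewrite Rabs_pos_eq by (apply pow_le; lra). nra. Qed.

Lemma binom r q : 1 < r -> 0 < q < 1 -> is_series (uu r q) (Rpower (1 - q) (- r)).
Proof.
  intros hr hq. set (P := Rpower (1 - q) (- r)).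
  assert (HP : P * Rpower (1 - q) r = 1).
  { unfold P. rewrite Rpower_Ropp. field. unfold Rpower. apply Rgt_not_eq, exp_pos. }
  assert (HP0 : 0 < P) by (unfold P, Rpower; apply exp_pos).
  assert (L0 : is_lim_seq (fun N => INR (S N) * uu r q (S N)) 0).
  { apply (is_lim_seq_incr_1 (fun N => INR N * uu r q N)). apply ex_series_lim_0. apply ex_nuu; auto. }
  assert (L1 : is_lim_seq (fun N => P - sum_f_R0 (uu r q) N) 0).
  { apply is_lim_seq_le_le with (fun _ => 0) (fun N => P * (INR (S N) * uu r q (S N))).
    intros N. pose proof (binom_partial r q N ltac:(lra) hq).
    replace (P - sum_f_R0 (uu r q) N) with (P * (1 - Rpower (1 - q) r * sum_f_R0 (uu r q) N)).
    split; [apply Rmult_le_pos; lra| apply Rmult_le_compat_l; lra].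
    replace (P * (1 - Rpower (1 - q) r * sum_f_R0 (uu r q) N)) with (P - (P * Rpower (1 - q) r) * sum_f_R0 (uu r q) N) by ring.
    rewrite HP; ring.
    apply is_lim_seq_const.
    replace (Finite 0) with (Rbar_mult P 0) by (simpl; f_equal; ring).
    apply is_lim_seq_scal_l. auto. }
  apply (proj2 (is_series_Reals _ _)).
  apply (proj1 (is_lim_seq_Reals _ _)).
  apply is_lim_seq_ext with (fun N => P - (P - sum_f_R0 (uu r q) N)). intros; ring.
  replace (Finite P) with (Finite (P - 0)) by (f_equal; ring).
  apply is_lim_seq_minus'. apply is_lim_seq_const. auto.
Qed.

Lemma exsc (c : R) (a : nat -> R) : ex_series a -> ex_series (fun n => c * a n).
Proof. intros H. exact (ex_series_scal_l c a H). Qed.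

Lemma exsum (a b : nat -> R) : ex_series a -> ex_series b -> ex_series (fun n => a n + b n).
Proof. intros H1 H2. exact (ex_series_plus a b H1 H2). Qed.

Lemma mom1 r q : 1 < r -> 0 < q < 1 ->
  (1 - q) * Series (fun n => INR n * uu r q n) = q * r * Series (uu r q).
Proof. intros hr hq.
  pose proof (Series_incr_1 _ (ex_nuu r q hr hq)) as Hi. cbv beta in Hi. replace (INR 0 * uu r q 0) with 0 in Hi by (simpl; ring).
  assert (E : Series (fun k => INR (S k) * uu r q (S k)) = q * r * Series (uu r q) + q * Series (fun n => INR n * uu r q n)).
  { rewrite (Series_ext _ (fun n => q * r * uu r q n + q * (INR n * uu r q n))).
    rewrite Series_plus, !Series_scal_l. reflexivity.
    apply (exsc (q*r)); apply ex_uu; auto. apply (exsc q); apply ex_nuu; auto.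
    intros n. rewrite Rmult_comm, uu_rec. ring. }
  rewrite E in Hi. lra. Qed.

Lemma mom2 r q : 1 < r -> 0 < q < 1 ->
  (1 - q) * Series (fun n => INR n ^ 2 * uu r q n) =
   q * ((r + 1) * Series (fun n => INR n * uu r q n) + r * Series (uu r q)).
Proof. intros hr hq.
  pose proof (Series_incr_1 _ (ex_n2uu r q hr hq)) as Hi. cbv beta in Hi. replace (INR 0 ^ 2 * uu r q 0) with 0 in Hi by (simpl; ring).
  assert (E : Series (fun k => INR (S k) ^ 2 * uu r q (S k)) = q * ((r + 1) * Series (fun n => INR n * uu r q n) + r * Series (uu r q)) + q * Series (fun n => INR n ^ 2 * uu r q n)).
  { rewrite (Series_ext _ (fun n => (q * (r+1)) * (INR n * uu r q n) + ((q * r) * uu r q n + q * (INR n ^ 2 * uu r q n)))).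
    rewrite Series_plus, Series_plus, !Series_scal_l. ring.
    apply (exsc (q*r)); apply ex_uu; auto. apply (exsc q); apply ex_n2uu; auto.
    apply (exsc (q*(r+1))); apply ex_nuu; auto.
    apply (exsum (fun n => (q * r) * uu r q n) (fun n => q * (INR n ^ 2 * uu r q n))).
    apply (exsc (q*r)); apply ex_uu; auto. apply (exsc q); apply ex_n2uu; auto.
    intros n. replace (INR (S n) ^ 2 * uu r q (S n)) with (INR (S n) * (uu r q (S n) * INR (S n))) by ring.
    rewrite uu_rec, S_INR. ring. }
  rewrite E in Hi. lra. Qed.

Fixpoint LL r q k := match k with 0%nat => 0 | S m => LL r q m + uu r q m end.

Lemma LL_sum r q m : LL r q (S m) = sum_f_R0 (uu r q) m.
Proof. induction m. simpl. ring. change (LL r q (S (S m))) with (LL r q (S m) + uu r q (S m)). rewrite IHm. simpl. ring. Qed.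

Lemma ex_tail (a : nat -> R) k : ex_series a -> ex_series (fun i => a (k + i)%nat).
Proof. intros. apply (proj1 (ex_series_incr_n a k)); auto. Qed.

Lemma split_gen (a : nat -> R) k : ex_series a -> Series a = sum_f_R0 (fun j => a j) 0 * 0 + 
   (match k with 0%nat => 0 | S m => sum_f_R0 a m end) + Series (fun i => a (k + i)%nat).
Proof. intros He. destruct k.
  - simpl. rewrite (Series_ext (fun i => a i) a) by auto. ring.
  - rewrite (Series_incr_n a (S k)) by (lia || auto). simpl pred. ring.
Qed.

Lemma split_uu r q k : 1 < r -> 0 < q < 1 -> Series (uu r q) = LL r q k + Series (fun i => uu r q (k + i)).
Proof. intros. rewrite (split_gen (uu r q) k) by (apply ex_uu; auto). destruct k. simpl; ring.
  rewrite LL_sum. ring. Qed.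

Lemma uu_ratio r q k i : 1 < r -> 0 < q < 1 -> (1 <= k)%nat ->
  uu r q (k + i) * (r * q) <= uu r q k * uu r q (S i).
Proof. intros hr hq hk. induction i.
  - rewrite Nat.add_0_r. replace (uu r q 1) with (r * q). lra.
    rewrite uu_S, uu_0. simpl. field.
  - replace (k + S i)%nat with (S (k + i)) by lia. rewrite (uu_S r q (k + i)), (uu_S r q (S i)).
    rewrite plus_INR. rewrite S_INR.
    pose proof (pos_INR i). assert (1 <= INR k) by (apply (le_INR 1); auto).
    pose proof (uu_pos r q (k+i) ltac:(lra) ltac:(lra)). pose proof (uu_pos r q k ltac:(lra) ltac:(lra)).
    pose proof (uu_pos r q (S i) ltac:(lra) ltac:(lra)).
    assert (Hf : (r + (INR k + INR i)) / (INR k + INR i + 1) <= (r + (INR i + 1)) / (INR i + 1 + 1)).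
    { apply (Rmult_le_reg_r ((INR k + INR i + 1) * (INR i + 1 + 1))). nra.
      field_simplify; try lra. nra. }
    assert (Hf0 : 0 <= (r + (INR k + INR i)) / (INR k + INR i + 1)) by (apply Rdiv_le_0_compat; lra).
    replace (q * (r + (INR k + INR i)) / (INR k + INR i + 1) * uu r q (k + i) * (r * q))
      with (q * ((r + (INR k + INR i)) / (INR k + INR i + 1)) * (uu r q (k + i) * (r * q))) by (field; lra).
    replace (uu r q k * (q * (r + (INR i + 1)) / (INR i + 1 + 1) * uu r q (S i)))
      with (q * ((r + (INR i + 1)) / (INR i + 1 + 1)) * (uu r q k * uu r q (S i))) by (field; lra).
    apply Rmult_le_compat; try nra. apply Rmult_le_pos; nra.
Qed.

Lemma uu_geom r q m i : 1 <= r -> 0 < q < 1 -> q ^ i * uu r q m <= uu r q (m + i).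
Proof. intros hr hq. induction i.
  - rewrite Nat.add_0_r; simpl; lra.
  - replace (m + S i)%nat with (S (m + i)) by lia. rewrite uu_S.
    pose proof (pos_INR (m + i)). assert (0 < uu r q m) by (apply uu_pos; lra).
    assert (1 <= (r + INR (m + i)) / (INR (m + i) + 1)).
    { apply (Rmult_le_reg_r (INR (m + i) + 1)). lra. field_simplify; lra. }
    simpl. replace (q * (r + INR (m + i)) / (INR (m + i) + 1) * uu r q (m + i)) with
      (q * ((r + INR (m + i)) / (INR (m + i) + 1)) * uu r q (m + i)) by (field; lra).
    assert (0 < uu r q (m + i)) by (apply uu_pos; lra).
    apply Rle_trans with (q * uu r q (m + i)). rewrite Rmult_assoc; apply Rmult_le_compat_l; lra.
    rewrite Rmult_assoc. apply Rmult_le_compat_l. lra. nra.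
Qed.

Definition hh z j := pospart (INR j - z).

Lemma hh_nonneg z j : 0 <= hh z j.
Proof. unfold hh, pospart. apply Rmax_r. Qed.
Lemma hh_zero z j : INR j <= z -> hh z j = 0.
Proof. intros. unfold hh, pospart. apply Rmax_right. lra. Qed.
Lemma hh_lin z j : z <= INR j -> hh z j = INR j - z.
Proof. intros. unfold hh, pospart. apply Rmax_left. lra. Qed.
Lemma hh_le z j : 0 <= z -> hh z j <= INR j.
Proof. intros. unfold hh, pospart. pose proof (pos_INR j). apply Rmax_lub; lra. Qed.
Lemma hh_ge z j : INR j - z <= hh z j.
Proof. unfold hh, pospart. apply Rmax_l. Qed.

Lemma ex_uh r q z : 1 < r -> 0 < q < 1 -> 0 <= z -> ex_series (fun j => uu r q j * hh z j).
Proof. intros. apply (ex_series_ext (fun j => hh z j * uu r q j)). intros; apply Rmult_comm.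
  apply (ex_w r q (hh z)); auto. intros n. rewrite Rabs_pos_eq by apply hh_nonneg.
  pose proof (hh_le z n H1). pose proof (pos_INR n). nra. Qed.

Lemma Epos_eq r p z : negbin_Epos r p z = Rpower p r * Series (fun j => uu r (1 - p) j * hh z j).
Proof. unfold negbin_Epos. rewrite <- Series_scal_l. apply Series_ext. intros n.
  unfold negbin_pmf, uu, cc, hh. ring. Qed.

Lemma gz_eq r p z k : 1 < r -> 0 < p < 1 -> (1 <= k)%nat ->
  g_z r p z k = - Series (fun i => uu r (1 - p) (k + i) * (hh z (k + i) - negbin_Epos r p z)) / (INR k * uu r (1 - p) k).
Proof. intros hr hp hk. destruct k as [|k]. lia.
  unfold g_z. unfold Rdiv. rewrite Ropp_mult_distr_l_reverse.
  f_equal. rewrite <- Series_scal_r. apply Series_ext. intros i. cbv zeta.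
  replace (S k - 1)%nat with k by lia. replace (S k + i - S k)%nat with i by lia.
  unfold uu, cc, hh. rewrite pow_add. rewrite fact_simpl, mult_INR.
  pose proof (INR_fact_pos k). pose proof (INR_fact_pos (S k + i)). pose proof (rising_pos r (S k) ltac:(lra)).
  pose proof (rising_pos r (S k + i) ltac:(lra)).
  assert (0 < (1 - p) ^ S k) by (apply pow_lt; lra). assert (0 < (1 - p) ^ i) by (apply pow_lt; lra).
  assert (0 < INR (S k)) by (apply lt_0_INR; lia).
  field. repeat split; lra.
Qed.

Definition UU r q k := Series (fun i => uu r q (k + i)).
Definition TT r q k := Series (fun i => INR (k + i) * uu r q (k + i)).

Lemma ex_UU r q k : 1 < r -> 0 < q < 1 -> ex_series (fun i => uu r q (k + i)).
Proof. intros. apply (ex_tail (uu r q)). apply ex_uu; auto. Qed.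
Lemma ex_TT r q k : 1 < r -> 0 < q < 1 -> ex_series (fun i => INR (k + i) * uu r q (k + i)).
Proof. intros. apply (ex_tail (fun n => INR n * uu r q n)). apply ex_nuu; auto. Qed.

Lemma UU_nonneg r q k : 1 < r -> 0 < q < 1 -> 0 <= UU r q k.
Proof. intros. apply Series_nonneg. intros; apply Rlt_le, uu_pos; lra. apply ex_UU; auto. Qed.

Lemma UU_S r q k : 1 < r -> 0 < q < 1 -> UU r q k = uu r q k + UU r q (S k).
Proof. intros. unfold UU. rewrite Series_incr_1 by (apply ex_UU; auto). rewrite Nat.add_0_r.
  f_equal. apply Series_ext. intros; f_equal; lia. Qed.

Lemma TT_eq r q k : 1 < r -> 0 < q < 1 -> (1 - q) * TT r q k = INR k * uu r q k + q * r * UU r q k.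
Proof. intros hr hq. unfold TT, UU.
  pose proof (Series_incr_1 _ (ex_TT r q k hr hq)) as Hi. cbv beta in Hi. rewrite Nat.add_0_r in Hi.
  assert (E : Series (fun i => INR (k + S i) * uu r q (k + S i)) =
     q * r * Series (fun i => uu r q (k + i)) + q * Series (fun i => INR (k + i) * uu r q (k + i))).
  { rewrite (Series_ext _ (fun i => q * r * uu r q (k + i) + q * (INR (k + i) * uu r q (k + i)))).
    rewrite Series_plus, !Series_scal_l. reflexivity.
    apply exsc; apply ex_UU; auto. apply exsc; apply ex_TT; auto.
    intros i. replace (k + S i)%nat with (S (k + i)) by lia. rewrite Rmult_comm, uu_rec. ring. }
  rewrite E in Hi. lra. Qed.

Lemma TT_ge r q k : 1 < r -> 0 < q < 1 -> INR k * UU r q k <= TT r q k.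
Proof. intros. unfold TT, UU. rewrite <- Series_scal_l.
  assert (0 <= Series (fun i => INR (k + i) * uu r q (k + i) - INR k * uu r q (k + i))).
  { apply Series_nonneg. intros i. rewrite plus_INR. pose proof (pos_INR i). pose proof (uu_pos r q (k+i) ltac:(lra) ltac:(lra)). nra.
    apply (ex_series_ext (fun i => INR (k + i) * uu r q (k + i) + (-INR k) * uu r q (k + i))).
    intros; simpl; ring. apply exsum. apply ex_TT; auto. apply exsc; apply ex_UU; auto. }
  rewrite Series_minus in H1. lra. apply ex_TT; auto. apply exsc; apply ex_UU; auto. Qed.

Lemma UU_upper r q k : 1 < r -> 0 < q < 1 -> (1 <= k)%nat ->
  UU r q k * (r * q) <= uu r q k * (Series (uu r q) - 1).
Proof. intros hr hq hk. unfold UU.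
  pose proof (Series_incr_1 _ (ex_uu r q hr hq)) as Hi. rewrite uu_0 in Hi.
  replace (Series (uu r q) - 1) with (Series (fun k => uu r q (S k))) by lra.
  rewrite <- Series_scal_r, <- Series_scal_l. apply Series_le.
  intros i. split. apply Rmult_le_pos. apply Rlt_le, uu_pos; lra. nra. apply uu_ratio; auto.
  apply exsc. apply (proj1 (ex_series_incr_1 (uu r q))). apply ex_uu; auto. Qed.

Lemma Series_geom_val q : 0 < q < 1 -> Series (fun i => q ^ i) = / (1 - q).
Proof. intros. apply is_series_unique. apply is_series_geom. rewrite Rabs_pos_eq; lra. Qed.

Lemma UU_lower r q m : 1 < r -> 0 < q < 1 -> uu r q m / (1 - q) <= UU r q m.
Proof. intros hr hq. unfold UU. unfold Rdiv. rewrite <- Series_geom_val by auto. rewrite <- Series_scal_l.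
  apply Series_le. intros i. split. apply Rmult_le_pos. apply Rlt_le, uu_pos; lra. apply pow_le; lra.
  rewrite Rmult_comm. apply uu_geom; lra. apply ex_UU; auto. Qed.

Lemma bernoulli r q : 1 < r -> 0 < q < 1 -> r * q / (1 - q) <= Series (uu r q) - 1.
Proof. intros hr hq. pose proof (Series_incr_1 _ (ex_uu r q hr hq)) as Hi. rewrite uu_0 in Hi.
  pose proof (UU_lower r q 1 hr hq). unfold UU in H.
  replace (uu r q 1) with (r * q) in H by (rewrite uu_S, uu_0; simpl; field).
  rewrite (Series_ext (fun i => uu r q (1 + i)) (fun k => uu r q (S k))) in H by auto. lra. Qed.

Lemma M_ge1 r q : 1 < r -> 0 < q < 1 -> 1 <= Series (uu r q).
Proof. intros. pose proof (bernoulli r q H H0). assert (0 <= r * q / (1 - q)) by (apply Rdiv_le_0_compat; nra). lra. Qed.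

Lemma M_eq r p : 1 < r -> 0 < p < 1 -> Series (uu r (1 - p)) = Rpower p (- r).
Proof. intros. apply is_series_unique. replace p with (1 - (1 - p)) at 2 by ring. apply binom; lra. Qed.

Lemma Series_mono (a b : nat -> R) : (forall n, a n <= b n) -> ex_series a -> ex_series b -> Series a <= Series b.
Proof. intros H Ha Hb. assert (0 <= Series (fun n => b n - a n)).
  { apply Series_nonneg. intros n; specialize (H n); lra.
    apply (ex_series_ext (fun n => b n + (-1) * a n)). intros; simpl; ring. apply exsum; auto. apply exsc; auto. }
  rewrite Series_minus in H0 by auto. lra. Qed.

Lemma H0_bounds r p z : 1 < r -> 0 < p < 1 -> 0 < z ->
  Series (fun j => INR j * uu r (1-p) j) - z * Series (uu r (1-p)) <= Series (fun j => uu r (1-p) j * hh z j) <=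
  Series (fun j => INR j * uu r (1-p) j).
Proof. intros hr hp hz. assert (hq : 0 < 1 - p < 1) by lra.
  split.
  - rewrite <- Series_scal_l, <- Series_minus. apply Series_mono.
    intros n. pose proof (hh_ge z n). pose proof (uu_pos r (1-p) n ltac:(lra) ltac:(lra)). nra.
    apply (ex_series_ext (fun j => INR j * uu r (1-p) j + (-z) * uu r (1-p) j)). intros; simpl; ring.
    apply exsum. apply ex_nuu; auto. apply exsc, ex_uu; auto.
    apply ex_uh; auto; lra. apply ex_nuu; auto. apply exsc, ex_uu; auto.
  - apply Series_mono. intros n. pose proof (hh_le z n ltac:(lra)). pose proof (uu_pos r (1-p) n ltac:(lra) ltac:(lra)). nra.
    apply ex_uh; auto; lra. apply ex_nuu; auto.
Qed.

Lemma div_le a b c d : 0 < b -> 0 < d -> a * d <= c * b -> a / b <= c / d.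
Proof. intros hb hd H. apply (Rmult_le_reg_r (b * d)). nra.
  replace (a / b * (b * d)) with (a * d) by (field; lra). replace (c / d * (b * d)) with (c * b) by (field; lra). auto. Qed.

Lemma finA1 p q r K z u U P : p + q = 1 -> 0 < p -> 0 < q -> 1 < r -> 1 <= K -> 0 < z <= K -> 0 < u ->
  q * r <= p * K -> r * q / p <= P - 1 -> u + q * (r + K) * u / ((K + 1) * p) <= U ->
  0 <= K * u - (p * K - q * r) * U ->
  z * (K * u - (p * K - q * r) * U) / (K * q * (r + K) * u) <= (2 * P - 1) / (p * z).
Proof. intros hpq hp hq hr hK hz hu h1 hP hU hQ.
  set (Q := K * u - (p * K - q * r) * U) in *.
  assert (HPb : q * r <= P - 1). { assert (r * q / p >= r * q) by (apply Rle_ge; unfold Rdiv; rewrite <- (Rmult_1_r (r*q)) at 1; apply Rmult_le_compat_l; [nra|]; rewrite <- Rinv_1; apply Rinv_le_contravar; lra). lra. }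
  assert (HQ1 : Q <= K * u - (p * K - q * r) * (u + q * (r + K) * u / ((K + 1) * p))).
  { unfold Q. assert (0 <= p * K - q * r) by lra. nra. }
  assert (HQ2 : K * u - (p * K - q * r) * (u + q * (r + K) * u / ((K + 1) * p)) = u * q * (r + K) * (p + q * r) / ((K + 1) * p)).
  { replace q with (1 - p) by lra. field. split; lra. }
  rewrite HQ2 in HQ1.
  assert (HQ3 : p * K * Q <= K * u * q * (r + K) * (p + q * r) / (K + 1)).
  { apply Rle_trans with (p * K * (u * q * (r + K) * (p + q * r) / ((K + 1) * p))).
    apply Rmult_le_compat_l; nra. right; field; lra. }
  assert (HQ4 : K * u * q * (r + K) * (p + q * r) / (K + 1) <= u * q * (r + K) * (2 * P - 1)).
  { assert (K / (K + 1) <= 1) by (apply (Rmult_le_reg_r (K+1)); [lra|]; field_simplify; lra).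
    assert (p + q * r <= 2 * P - 1) by nra.
    assert (0 <= u * q * (r + K)) by (apply Rmult_le_pos; nra).
    replace (K * u * q * (r + K) * (p + q * r) / (K + 1)) with ((u * q * (r + K)) * ((K / (K+1)) * (p + q * r))) by (field; lra).
    apply Rmult_le_compat_l; auto. assert (0 <= K/(K+1)) by (apply Rdiv_le_0_compat; lra). nra. }
  assert (Hfin : p * z * z * Q <= K * q * (r + K) * u * (2 * P - 1)).
  { apply Rle_trans with (p * K * K * Q). assert (z * z <= K * K) by (apply Rmult_le_compat; lra).
    apply Rmult_le_compat_r. lra. rewrite !Rmult_assoc. apply Rmult_le_compat_l; lra.
    replace (p * K * K * Q) with (K * (p * K * Q)) by ring.
    replace (K * q * (r + K) * u * (2 * P - 1)) with (K * (u * q * (r + K) * (2 * P - 1))) by ring.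
    apply Rmult_le_compat_l; lra. }
  apply div_le. apply Rmult_lt_0_compat; [|lra]. apply Rmult_lt_0_compat; [|nra]. nra. nra.
  nra.
Qed.

Lemma finA2 p q r K z u U P : p + q = 1 -> 0 < p -> 0 < q -> 1 < r -> 1 <= K -> 0 < z <= K -> 0 < u ->
  p * K < q * r -> r * q / p <= P - 1 -> U * (r * q) <= u * (P - 1) -> 0 <= U ->
  0 <= K * u - (p * K - q * r) * U ->
  z * (K * u - (p * K - q * r) * U) / (K * q * (r + K) * u) <= (2 * P - 1) / (p * z).
Proof. intros hpq hp hq hr hK hz hu h1 hP hU hU0 hQ.
  set (Q := K * u - (p * K - q * r) * U) in *.
  assert (HK : K <= P - 1).
  { apply Rle_trans with (r * q / p); auto. apply (Rmult_le_reg_r p); auto. unfold Rdiv. rewrite Rmult_assoc, Rinv_l by lra. lra. }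
  assert (HQ1 : Q <= K * u + u * (P - 1)).
  { unfold Q. assert (0 <= p * K * U) by (apply Rmult_le_pos; [|lra]; apply Rmult_le_pos; lra).
    assert ((q * r - p * K) * U <= U * (r * q)) by nra. lra. }
  assert (HQ3 : p * K * Q <= u * q * (r + K) * (2 * P - 1)).
  { apply Rle_trans with (p * K * (K * u + u * (P - 1))). apply Rmult_le_compat_l; nra.
    replace (p * K * (K * u + u * (P - 1))) with (u * (p * K * (K + (P - 1)))) by ring.
    replace (u * q * (r + K) * (2 * P - 1)) with (u * (q * (r + K) * (2 * P - 1))) by ring.
    apply Rmult_le_compat_l; [lra|].
    apply Rle_trans with (p * K * (2 * (P - 1))). apply Rmult_le_compat_l; nra.
    apply Rle_trans with (q * r * (2 * (P - 1))). apply Rmult_le_compat_r; nra.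
    assert (0 <= q * K * (2 * P - 1)) by (apply Rmult_le_pos; nra).
    assert (0 <= q * r) by nra.
    replace (q * (r + K) * (2 * P - 1)) with (q * r * (2 * P - 1) + q * K * (2 * P - 1)) by ring.
    replace (q * r * (2 * (P - 1))) with (q * r * (2 * P - 1) - q * r) by ring. lra. }
  assert (Hfin : p * z * z * Q <= K * q * (r + K) * u * (2 * P - 1)).
  { apply Rle_trans with (p * K * K * Q). assert (z * z <= K * K) by (apply Rmult_le_compat; lra).
    apply Rmult_le_compat_r. lra. rewrite !Rmult_assoc. apply Rmult_le_compat_l; lra.
    replace (p * K * K * Q) with (K * (p * K * Q)) by ring.
    replace (K * q * (r + K) * u * (2 * P - 1)) with (K * (u * q * (r + K) * (2 * P - 1))) by ring.
    apply Rmult_le_compat_l; lra. }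
  apply div_le. apply Rmult_lt_0_compat; [|lra]. apply Rmult_lt_0_compat; [|nra]. nra. nra.
  nra.
Qed.

Lemma finB p q r K z M m1 m2 : p + q = 1 -> 0 < p -> 0 < q -> 1 < r -> 2 <= K -> 0 < z -> 1 <= M ->
  p * m1 = q * r * M -> p * m2 = q * ((r + 1) * m1 + r * M) ->
  p * (m2 + (K - 2) * m1 - (K - 1) * M + (K - 1)) / (z * r * q ^ 2 * (r + K))
   <= / z * ((1 + / q) * (M / p ^ 2) - / p ^ 2).
Proof. intros hpq hp hq hr hK hz hM E1 E2.
  assert (A : p ^ 3 * (m2 + (K - 2) * m1 - (K - 1) * M + (K - 1)) =
     r * (r + 1) * q ^ 2 * p * M + (K - 1) * (p ^ 2 * q * r * M) - (K - 1) * p ^ 3 * (M - 1)).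
  { replace (p ^ 3 * (m2 + (K - 2) * m1 - (K - 1) * M + (K - 1))) with
      (p ^ 2 * (p * m2) + (K - 2) * p ^ 2 * (p * m1) - (K - 1) * p ^ 3 * (M - 1)) by ring.
    rewrite E2. replace (p ^ 2 * (q * ((r + 1) * m1 + r * M))) with (p * q * (r + 1) * (p * m1) + p ^ 2 * q * r * M) by ring.
    rewrite E1. replace q with (1 - p) by lra. ring. }
  replace (/ z * ((1 + / q) * (M / p ^ 2) - / p ^ 2)) with (((1 + q) * M - q) / (q * p ^ 2 * z)) by (field; repeat split; lra).
  apply div_le. repeat apply Rmult_lt_0_compat; try apply pow_lt; lra.
  repeat apply Rmult_lt_0_compat; try apply pow_lt; lra.
  set (S := m2 + (K - 2) * m1 - (K - 1) * M + (K - 1)) in *.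
  assert (B : p ^ 3 * S <= r * q * (r + K) * ((1 + q) * M - q)).
  { rewrite A. assert (0 <= (K - 1) * p ^ 3 * (M - 1)) by (apply Rmult_le_pos; [apply Rmult_le_pos|]; try lra; apply pow_le; lra).
    assert (r * (r + 1) * q ^ 2 * p * M <= r * q * (r + 1) * M).
    { replace (r * (r + 1) * q ^ 2 * p * M) with ((r * q * (r + 1) * M) * (q * p)) by ring.
      rewrite <- (Rmult_1_r (r * q * (r + 1) * M)) at 2. apply Rmult_le_compat_l. repeat apply Rmult_le_pos; lra. simpl; nra. }
    assert ((K - 1) * (p ^ 2 * q * r * M) <= r * q * (K - 1) * M).
    { replace ((K - 1) * (p ^ 2 * q * r * M)) with ((r * q * (K - 1) * M) * (p ^ 2)) by ring.
      rewrite <- (Rmult_1_r (r * q * (K - 1) * M)) at 2. apply Rmult_le_compat_l. repeat apply Rmult_le_pos; lra. simpl; nra. }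
    assert (r * q * (r + K) * ((1 + q) * M - q) >= r * q * (r + K) * M).
    { apply Rle_ge. apply Rmult_le_compat_l. repeat apply Rmult_le_pos; lra. nra. }
    nra. }
  replace (p * S * (q * p ^ 2 * z)) with (p ^ 3 * S * (q * z)) by ring.
  replace (((1 + q) * M - q) * (z * r * q ^ 2 * (r + K))) with ((r * q * (r + K) * ((1 + q) * M - q)) * (q * z)) by ring.
  apply Rmult_le_compat_r. nra. auto.
Qed.

Lemma finC p q r z M m1 m2 : p + q = 1 -> 0 < p -> 0 < q -> 1 < r -> 0 < z -> 1 <= M ->
  p * m1 = q * r * M -> p * m2 = q * ((r + 1) * m1 + r * M) ->
  p * (m2 + (1 - 2) * m1 - (1 - 1) * M + (1 - 1)) / (z * r * q ^ 2 * (r + 1))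
   <= (r + 1) / z * (2 * (M / p ^ 2) - / p ^ 2).
Proof. intros hpq hp hq hr hz hM E1 E2.
  assert (A : p ^ 3 * (m2 + (1 - 2) * m1 - (1 - 1) * M + (1 - 1)) = r * (r + 1) * q ^ 2 * p * M).
  { replace (p ^ 3 * (m2 + (1 - 2) * m1 - (1 - 1) * M + (1 - 1))) with
      (p ^ 2 * (p * m2) - p ^ 2 * (p * m1)) by ring.
    rewrite E2. replace (p ^ 2 * (q * ((r + 1) * m1 + r * M))) with (p * q * (r + 1) * (p * m1) + p ^ 2 * q * r * M) by ring.
    rewrite E1. replace q with (1 - p) by lra. ring. }
  replace ((r + 1) / z * (2 * (M / p ^ 2) - / p ^ 2)) with ((r + 1) * (2 * M - 1) / (p ^ 2 * z)) by (field; repeat split; lra).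
  apply div_le. repeat apply Rmult_lt_0_compat; try apply pow_lt; lra.
  repeat apply Rmult_lt_0_compat; try apply pow_lt; lra.
  set (S := m2 + (1 - 2) * m1 - (1 - 1) * M + (1 - 1)) in *.
  replace (p * S * (p ^ 2 * z)) with (p ^ 3 * S * z) by ring. rewrite A.
  replace ((r + 1) * (2 * M - 1) * (z * r * q ^ 2 * (r + 1))) with ((r * (r + 1) * q ^ 2 * M) * ((r + 1) * z) + (r * (r + 1) * q ^ 2 * (M - 1)) * ((r + 1) * z)) by ring.
  assert (0 <= (r * (r + 1) * q ^ 2 * (M - 1)) * ((r + 1) * z)).
  { assert (0 < q ^ 2) by (apply pow_lt; lra). repeat apply Rmult_le_pos; lra. }
  assert (r * (r + 1) * q ^ 2 * p * M * z <= (r * (r + 1) * q ^ 2 * M) * ((r + 1) * z)).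
  { replace (r * (r + 1) * q ^ 2 * p * M * z) with ((r * (r + 1) * q ^ 2 * M) * (p * z)) by ring.
    apply Rmult_le_compat_l. assert (0 < q ^ 2) by (apply pow_lt; lra). repeat apply Rmult_le_pos; lra. nra. }
  lra.
Qed.

Lemma G_big r p z k c : 1 < r -> 0 < p < 1 -> z <= INR k ->
  p * Series (fun i => uu r (1 - p) (k + i) * (hh z (k + i) - c)) =
  INR k * uu r (1 - p) k + ((1 - p) * r - p * z - p * c) * UU r (1 - p) k.
Proof. intros hr hp hk. assert (hq : 0 < 1 - p < 1) by lra.
  rewrite (Series_ext _ (fun i => INR (k + i) * uu r (1 - p) (k + i) + (- (z + c)) * uu r (1 - p) (k + i))).
  rewrite Series_plus, Series_scal_l. fold (TT r (1 - p) k). fold (UU r (1 - p) k).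
  pose proof (TT_eq r (1 - p) k hr hq). replace (1 - (1 - p)) with p in H by ring. nra.
  apply ex_TT; auto. apply exsc, ex_UU; auto.
  intros i. rewrite hh_lin. ring. rewrite plus_INR. pose proof (pos_INR i). lra.
Qed.

Lemma Rpower_m1 p r : 0 < p -> Rpower p (- (r + 1)) = Rpower p (- r) / p.
Proof. intros hp. replace (- (r + 1)) with (- r + - (1)) by ring. rewrite Rpower_plus, (Rpower_Ropp p 1), Rpower_1 by auto.
  unfold Rdiv; ring. Qed.

Lemma Rpower_m2 p r : 0 < p -> Rpower p (- (r + 2)) = Rpower p (- r) / p ^ 2.
Proof. intros hp. replace (- (r + 2)) with (- (r + 1) + - (1)) by ring. rewrite Rpower_plus, (Rpower_Ropp p 1), Rpower_1 by auto.
  rewrite Rpower_m1 by auto. simpl. field. lra. Qed.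

Lemma c_facts r p z : 1 < r -> 0 < p < 1 -> 0 < z ->
  let c := negbin_Epos r p z in
  (1 - p) * r / p - z <= c <= (1 - p) * r / p.
Proof. intros hr hp hz c. unfold c. rewrite Epos_eq.
  pose proof (H0_bounds r p z hr hp hz) as [H1 H2].
  pose proof (M_eq r p hr hp) as HM.
  pose proof (mom1 r (1 - p) hr ltac:(lra)) as Hm1. replace (1 - (1 - p)) with p in Hm1 by ring.
  assert (HPr : Rpower p r * Series (uu r (1 - p)) = 1).
  { rewrite HM, Rpower_Ropp. field. unfold Rpower; apply Rgt_not_eq, exp_pos. }
  assert (Hpr : 0 < Rpower p r) by (unfold Rpower; apply exp_pos).
  set (M := Series (uu r (1 - p))) in *. set (m1 := Series (fun j => INR j * uu r (1 - p) j)) in *.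
  set (H0 := Series (fun j => uu r (1 - p) j * hh z j)) in *.
  assert (Em1 : Rpower p r * m1 = (1 - p) * r / p).
  { apply (Rmult_eq_reg_r p); [|lra].
    assert (X : Rpower p r * m1 * p = (1-p)*r*(Rpower p r * M)) by (replace (Rpower p r * m1 * p) with (Rpower p r * (p*m1)) by ring; rewrite Hm1; ring).
    rewrite X, HPr. field. lra. }
  split.
  - apply Rle_trans with (Rpower p r * (m1 - z * M)). right. rewrite Rmult_minus_distr_l, Em1.
    replace (Rpower p r * (z * M)) with (z * (Rpower p r * M)) by ring. rewrite HPr. ring.
    apply Rmult_le_compat_l; lra.
  - rewrite <- Em1. apply Rmult_le_compat_l; lra.
Qed.

Lemma big_case r p z k : 1 < r -> 0 < p < 1 -> 1 < z -> (1 <= k)%nat -> z <= INR k ->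
  Rabs (fdiff (g_z r p z) k) <= / z * (2 * Rpower p (- (r + 1)) - / p).
Proof.
  intros hr hp hz hk hzk.
  assert (hq : 0 < 1 - p < 1) by lra.
  unfold fdiff. rewrite (gz_eq r p z (S k)), (gz_eq r p z k) by (auto; lia).
  set (q := 1 - p) in *. set (c := negbin_Epos r p z).
  pose proof (c_facts r p z hr hp ltac:(lra)) as Hc. fold c q in Hc.
  pose proof (G_big r p z (S k) c hr hp ltac:(rewrite S_INR; lra)) as E1.
  pose proof (G_big r p z k c hr hp hzk) as E0. fold q in E1, E0.
  set (G1 := Series (fun i => uu r q (S k + i) * (hh z (S k + i) - c))) in *.
  set (G0 := Series (fun i => uu r q (k + i) * (hh z (k + i) - c))) in *.
  set (beta := q * r - p * z - p * c) in *.
  pose proof (UU_S r q k hr hq) as HU.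
  pose proof (uu_rec r q k) as Hrec.
  set (K := INR k) in *. assert (HK : 1 <= K) by (unfold K; apply (le_INR 1); auto).
  set (u0 := uu r q k) in *. set (u1 := uu r q (S k)) in *.
  assert (Hu0 : 0 < u0) by (apply uu_pos; lra). assert (Hu1 : 0 < u1) by (apply uu_pos; lra).
  set (U0 := UU r q k) in *. set (U1 := UU r q (S k)) in *.
  rewrite S_INR in E1, Hrec |- *. fold K in E1, Hrec |- *.
  set (Q := K * u0 - (p * K - q * r) * U0).
  assert (HQ : 0 <= Q).
  { pose proof (TT_ge r q k hr hq). pose proof (TT_eq r q k hr hq). fold K u0 U0 in H, H0.
    unfold Q. replace (1 - q) with p in H0 by (unfold q; ring). nra. }
  assert (Hdelta : - G1 / ((K + 1) * u1) - - G0 / (K * u0) = beta * Q / (p * K * q * (r + K) * u0)).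
  { assert (G1e : G1 = ((K + 1) * u1 + beta * U1) / p) by (apply (Rmult_eq_reg_l p); [rewrite E1; field; lra | lra]).
    assert (G0e : G0 = (K * u0 + beta * U0) / p) by (apply (Rmult_eq_reg_l p); [rewrite E0; field; lra | lra]).
    assert (u1e : u1 = q * (r + K) * u0 / (K + 1)) by (apply (Rmult_eq_reg_r (K + 1)); [rewrite Hrec; field; lra | lra]).
    rewrite G1e, G0e. replace U1 with (U0 - u0) by lra. rewrite u1e.
    unfold Q. unfold q. field. repeat split; lra. }
  rewrite Hdelta.
  assert (Hden : 0 < p * K * q * (r + K) * u0).
  { assert (0 < p*K) by nra. assert (0 < p*K*q) by nra. assert (0<p*K*q*(r+K)) by nra. nra. }
  cbv zeta in Hc.
  assert (Hb : Rabs beta <= p * z).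
  { unfold beta. apply Rabs_le. destruct Hc as [Hc1 Hc2].
    assert (p * c <= q * r) by (apply Rle_trans with (p * (q * r / p)); [apply Rmult_le_compat_l; lra| right; field; lra]).
    assert (q * r - p * z <= p * c) by (apply Rle_trans with (p * (q * r / p - z)); [right; field; lra| apply Rmult_le_compat_l; lra]).
    split; lra. }
  apply Rle_trans with (z * Q / (K * q * (r + K) * u0)).
  { unfold Rdiv. rewrite Rabs_mult, Rabs_mult, (Rabs_pos_eq Q HQ), (Rabs_pos_eq (/ _)) by (apply Rlt_le, Rinv_0_lt_compat; lra).
    apply Rle_trans with (p * z * Q * / (p * K * q * (r + K) * u0)).
    apply Rmult_le_compat_r. apply Rlt_le, Rinv_0_lt_compat; lra. apply Rmult_le_compat_r; lra.
    right. field. repeat split; lra. }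
  pose proof (M_eq r p hr hp) as HM. fold q in HM.
  rewrite Rpower_m1 by lra. rewrite <- HM.
  replace (/ z * (2 * (Series (uu r q) / p) - / p)) with ((2 * Series (uu r q) - 1) / (p * z)) by (field; lra).
  pose proof (bernoulli r q hr hq) as Hbern. replace (1 - q) with p in Hbern by (unfold q; ring).
  unfold Q. destruct (Rle_lt_dec (q * r) (p * K)) as [Hcase | Hcase].
  - apply (finA1 p q r K z u0 U0); try lra. unfold q; ring.
    pose proof (UU_lower r q (S k) hr hq) as HL. fold U1 u1 in HL. replace (1 - q) with p in HL by (unfold q; ring).
    assert (u1e : u1 = q * (r + K) * u0 / (K + 1)) by (apply (Rmult_eq_reg_r (K + 1)); [rewrite Hrec; field; lra | lra]).
    rewrite u1e in HL.
    replace (q * (r + K) * u0 / ((K + 1) * p)) with (q * (r + K) * u0 / (K + 1) / p) by (field; lra). lra. exact HQ.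
  - apply (finA2 p q r K z u0 U0); try lra. unfold q; ring.
    apply UU_upper; auto. apply UU_nonneg; auto. exact HQ.
Qed.

Lemma sum_zero (a : nat -> R) m : (forall j, (j <= m)%nat -> a j = 0) -> sum_f_R0 a m = 0.
Proof. induction m; intros H; simpl. apply H; lia. rewrite IHm, H by (auto; lia). ring. Qed.

Lemma LL_nonneg r q k : 0 < r -> 0 < q -> 0 <= LL r q k.
Proof. intros. induction k; simpl. lra. pose proof (uu_pos r q k H H0). lra. Qed.

Lemma LY r q p k : p + q = 1 -> 0 < q -> 0 < p -> 0 < r ->
  0 <= INR k * uu r q k + (p * INR k - q * r) * LL r q k.
Proof. intros hpq hq hp hr. induction k.
  - simpl. lra.
  - assert (E : INR (S k) * uu r q (S k) + (p * INR (S k) - q * r) * LL r q (S k) =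
       INR k * uu r q k + (p * INR k - q * r) * LL r q k + p * LL r q (S k)).
    { rewrite Rmult_comm, uu_rec. simpl LL. rewrite S_INR. replace q with (1 - p) by lra. ring. }
    rewrite E. pose proof (LL_nonneg r q (S k) hr hq). nra.
Qed.

Lemma kuLL r q k : 0 < q <= 1 -> 0 < r -> INR k * uu r q k <= q * r * LL r q k.
Proof. intros hq hr. induction k.
  - simpl. lra.
  - rewrite Rmult_comm, uu_rec. simpl LL.
    pose proof (pos_INR k). pose proof (uu_pos r q k hr ltac:(lra)).
    assert (0 <= INR k * uu r q k) by (apply Rmult_le_pos; lra).
    set (X := INR k * uu r q k) in *.
    assert (q * X <= X) by nra.
    replace (q * (r + INR k) * uu r q k) with (q * r * uu r q k + q * X) by (unfold X; ring). lra.
Qed.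

Lemma hh_bound z k i : INR k < z -> 0 < z -> hh z (S k + i) <= INR (S k + i) * (INR i + 1) / z.
Proof. intros hk hz. rewrite plus_INR, S_INR. pose proof (pos_INR i).
  destruct (Rle_lt_dec (INR (S k + i)) z) as [Hl | Hl].
  - rewrite hh_zero by auto. apply Rdiv_le_0_compat; [|lra]. pose proof (pos_INR k). nra.
  - rewrite hh_lin by lra. rewrite plus_INR, S_INR in *.
    apply (Rmult_le_reg_r z); auto. unfold Rdiv. rewrite Rmult_assoc, Rinv_l, Rmult_1_r by lra.
    pose proof (pos_INR k). nra.
Qed.

Lemma G_small r p z k c : 1 < r -> 0 < p < 1 -> 0 < z -> (forall j, (j < k)%nat -> hh z j = 0) ->
  Series (fun i => uu r (1 - p) (k + i) * (hh z (k + i) - c)) =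
  Series (fun j => uu r (1 - p) j * hh z j) - c * UU r (1 - p) k.
Proof. intros hr hp hz H. assert (hq : 0 < 1 - p < 1) by lra.
  rewrite (split_gen (fun j => uu r (1 - p) j * hh z j) k) by (apply ex_uh; auto; lra).
  assert (Z : match k with 0%nat => 0 | S m => sum_f_R0 (fun j => uu r (1 - p) j * hh z j) m end = 0).
  { destruct k. auto. apply sum_zero. intros j hj. rewrite H by lia. ring. }
  rewrite Z. unfold UU.
  replace (sum_f_R0 (fun j : nat => uu r (1 - p) j * hh z j) 0 * 0) with 0 by ring. rewrite Rplus_0_l, Rplus_0_l.
  rewrite <- Series_scal_l, <- Series_minus.
  apply Series_ext. intros; ring.
  apply (ex_tail (fun j => uu r (1 - p) j * hh z j)). apply ex_uh; auto; lra.
  apply exsc, ex_UU; auto.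
Qed.

Lemma H0_upper r p z k : 1 < r -> 0 < p < 1 -> 0 < z -> (1 <= k)%nat -> INR k < z ->
  Series (fun j => uu r (1 - p) j * hh z j) <=
  uu r (1 - p) k / (r * (1 - p) * z) *
   (Series (fun n => INR n ^ 2 * uu r (1 - p) n) + (INR k - 2) * Series (fun n => INR n * uu r (1 - p) n)
    - (INR k - 1) * Series (uu r (1 - p)) + (INR k - 1)).
Proof. intros hr hp hz hk hkz. set (q := 1 - p). assert (hq : 0 < q < 1) by (unfold q; lra).
  set (K := INR k) in *. assert (HK : 1 <= K) by (unfold K; apply (le_INR 1); auto).
  set (a := fun n => INR n ^ 2 * uu r q n + ((K - 2) * (INR n * uu r q n) + (- (K - 1)) * uu r q n)).
  assert (Ea : ex_series a).
  { apply exsum. apply ex_n2uu; auto. apply exsum. apply exsc, ex_nuu; auto. apply exsc, ex_uu; auto. }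
  assert (Sa : Series a = Series (fun n => INR n ^ 2 * uu r q n) + (K - 2) * Series (fun n => INR n * uu r q n) - (K - 1) * Series (uu r q)).
  { unfold a. rewrite Series_plus, Series_plus, !Series_scal_l. ring.
    apply exsc, ex_nuu; auto. apply exsc, ex_uu; auto. apply ex_n2uu; auto.
    apply exsum. apply exsc, ex_nuu; auto. apply exsc, ex_uu; auto. }
  pose proof (Series_incr_n a 2 ltac:(lia) Ea) as Hi. simpl pred in Hi.
  assert (Hs : sum_f_R0 a 1 = - (K - 1)).
  { simpl. unfold a. rewrite uu_0. simpl INR. replace (uu r q 1) with (r * q) by (rewrite uu_S, uu_0; simpl; field). ring. }
  rewrite Hs, Sa in Hi.
  set (S2 := Series (fun n => INR n ^ 2 * uu r q n) + (K - 2) * Series (fun n => INR n * uu r q n) - (K - 1) * Series (uu r q) + (K - 1)).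
  assert (HS2 : S2 = Series (fun i => a (2 + i)%nat)) by (unfold S2; lra).
  rewrite HS2.
  rewrite (split_gen (fun j => uu r q j * hh z j) (S k)) by (apply ex_uh; auto; lra).
  rewrite (sum_zero (fun j => uu r q j * hh z j) k). 2:{ intros j hj. rewrite hh_zero. ring. apply Rle_trans with K. unfold K; apply le_INR; lia. lra. }
  replace (sum_f_R0 (fun j : nat => uu r q j * hh z j) 0 * 0 + 0) with 0 by ring. rewrite Rplus_0_l.
  rewrite <- Series_scal_l. apply Series_le.
  2:{ apply exsc. apply (ex_tail a 2). auto. }
  intros i. split. apply Rmult_le_pos. apply Rlt_le, uu_pos; lra. apply hh_nonneg.
  pose proof (uu_ratio r q k (S i) hr hq hk) as Hr. replace (k + S i)%nat with (S k + i)%nat in Hr by lia.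
  pose proof (hh_bound z k i hkz hz) as Hh. fold K in Hh.
  assert (Ea2 : a (2 + i)%nat = (K + INR i + 1) * (INR i + 1) * uu r q (S (S i))).
  { unfold a. replace (2 + i)%nat with (S (S i)) by lia. rewrite !S_INR. ring. }
  rewrite Ea2. rewrite plus_INR, S_INR in Hh. fold K in Hh.
  pose proof (uu_pos r q (S k + i) ltac:(lra) ltac:(lra)). pose proof (uu_pos r q (S (S i)) ltac:(lra) ltac:(lra)).
  pose proof (uu_pos r q k ltac:(lra) ltac:(lra)). pose proof (pos_INR i).
  apply Rle_trans with (uu r q (S k + i) * ((K + 1 + INR i) * (INR i + 1) / z)).
  apply Rmult_le_compat_l; lra.
  apply Rle_trans with ((uu r q k * uu r q (S (S i)) / (r * q)) * ((K + 1 + INR i) * (INR i + 1) / z)).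
  apply Rmult_le_compat_r. apply Rdiv_le_0_compat; [|lra]. nra.
  apply (Rmult_le_reg_r (r * q)). nra. unfold Rdiv at 1. rewrite Rmult_assoc, Rinv_l, Rmult_1_r by nra. auto.
  right. field. repeat split; lra.
Qed.

Lemma small_case r p z k : 1 < r -> 0 < p < 1 -> 1 < z -> (1 <= k)%nat -> INR k < z ->
  Rabs (fdiff (g_z r p z) k) <=
  p * (Series (fun n => INR n ^ 2 * uu r (1 - p) n) + (INR k - 2) * Series (fun n => INR n * uu r (1 - p) n)
    - (INR k - 1) * Series (uu r (1 - p)) + (INR k - 1)) / (z * r * (1 - p) ^ 2 * (r + INR k)).
Proof.
  intros hr hp hz hk hkz.
  assert (hq : 0 < 1 - p < 1) by lra.
  pose proof (H0_upper r p z k hr hp ltac:(lra) hk hkz) as HH.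
  unfold fdiff. rewrite (gz_eq r p z (S k)), (gz_eq r p z k) by (auto; lia).
  set (q := 1 - p) in *. set (c := negbin_Epos r p z).
  assert (Z1 : forall j, (j < S k)%nat -> hh z j = 0).
  { intros j hj. apply hh_zero. apply Rle_trans with (INR k). apply le_INR; lia. lra. }
  assert (Z0 : forall j, (j < k)%nat -> hh z j = 0) by (intros; apply Z1; lia).
  pose proof (G_small r p z (S k) c hr hp ltac:(lra) Z1) as E1.
  pose proof (G_small r p z k c hr hp ltac:(lra) Z0) as E0. fold q in E1, E0.
  pose proof (M_eq r p hr hp) as HM. fold q in HM.
  assert (HPr : Rpower p r * Series (uu r q) = 1).
  { rewrite HM, Rpower_Ropp. field. unfold Rpower; apply Rgt_not_eq, exp_pos. }
  assert (Hc : c = Rpower p r * Series (fun j => uu r q j * hh z j)) by (unfold c; rewrite Epos_eq; auto).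
  set (H0 := Series (fun j => uu r q j * hh z j)) in *.
  set (M := Series (uu r q)) in *.
  assert (HH0 : H0 = c * M). { rewrite Hc. replace (Rpower p r * H0 * M) with ((Rpower p r * M) * H0) by ring. rewrite HPr; ring. }
  assert (H0nn : 0 <= H0) by (apply Series_nonneg; [intros; apply Rmult_le_pos; [apply Rlt_le, uu_pos; lra| apply hh_nonneg] | apply ex_uh; auto; lra]).
  assert (cnn : 0 <= c) by (rewrite Hc; apply Rmult_le_pos; auto; left; unfold Rpower; apply exp_pos).
  pose proof (split_uu r q (S k) hr hq) as Sp1. pose proof (split_uu r q k hr hq) as Sp0. fold M in Sp1, Sp0.
  fold (UU r q (S k)) in Sp1. fold (UU r q k) in Sp0.
  set (G1 := Series (fun i => uu r q (S k + i) * (hh z (S k + i) - c))) in *.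
  set (G0 := Series (fun i => uu r q (k + i) * (hh z (k + i) - c))) in *.
  assert (G1e : G1 = c * LL r q (S k)) by (rewrite E1, HH0, Sp1; ring).
  assert (G0e : G0 = c * LL r q k) by (rewrite E0, HH0, Sp0; ring).
  pose proof (uu_rec r q k) as Hrec.
  pose proof (LY r q p k ltac:(unfold q; ring) ltac:(lra) ltac:(lra) ltac:(lra)) as HY.
  pose proof (kuLL r q k ltac:(lra) ltac:(lra)) as HkL.
  pose proof (UU_nonneg r q k hr hq) as HU0.
  change (LL r q (S k)) with (LL r q k + uu r q k) in G1e.
  set (K := INR k) in *. assert (HK : 1 <= K) by (unfold K; apply (le_INR 1); auto).
  set (u0 := uu r q k) in *. set (u1 := uu r q (S k)) in *. set (L := LL r q k) in *.
  assert (Hu0 : 0 < u0) by (apply uu_pos; lra).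
  rewrite S_INR in Hrec |- *. fold K in Hrec |- *.
  assert (u1e : u1 = q * (r + K) * u0 / (K + 1)) by (apply (Rmult_eq_reg_r (K + 1)); [rewrite Hrec; field; lra | lra]).
  set (Y := K * u0 + (p * K - q * r) * L) in *.
  assert (Hdelta : - G1 / ((K + 1) * u1) - - G0 / (K * u0) = - (c * Y) / (K * q * (r + K) * u0)).
  { rewrite G1e, G0e, u1e. unfold Y. unfold q. field. repeat split; lra. }
  rewrite Hdelta.
  assert (Hden : 0 < K * q * (r + K) * u0).
  { assert (0 < K*q) by nra. assert (0<K*q*(r+K)) by nra. nra. }
  unfold Rdiv. rewrite Ropp_mult_distr_l_reverse, Rabs_Ropp, Rabs_mult, Rabs_mult, (Rabs_pos_eq c cnn), (Rabs_pos_eq Y HY), (Rabs_pos_eq (/ _)) by (apply Rlt_le, Rinv_0_lt_compat; lra).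
  assert (HYb : Y <= p * K * M).
  { unfold Y. assert (L <= M) by lra. assert (0 <= p * K) by nra. nra. }
  apply Rle_trans with (p * H0 / (q * (r + K) * u0)).
  { rewrite HH0. apply Rle_trans with (c * (p * K * M) * / (K * q * (r + K) * u0)).
    apply Rmult_le_compat_r. apply Rlt_le, Rinv_0_lt_compat; lra. apply Rmult_le_compat_l; lra.
    right. field. repeat split; lra. }
  apply Rle_trans with (p * (u0 / (r * q * z) * (Series (fun n => INR n ^ 2 * uu r q n) + (K - 2) * Series (fun n => INR n * uu r q n) - (K - 1) * M + (K - 1))) / (q * (r + K) * u0)).
  { unfold Rdiv. apply Rmult_le_compat_r. apply Rlt_le, Rinv_0_lt_compat. nra. apply Rmult_le_compat_l; lra. }
  right. field. repeat split; lra.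
Qed.

Lemma cmpA p r z P : 0 < p < 1 -> 1 < r -> 0 < z -> 1 <= P ->
  / z * (2 * (P / p) - / p) <= (r + 1) / z * ((1 + / (1 - p)) * (P / p ^ 2) - / p ^ 2).
Proof. intros hp hr hz hP.
  replace (/ z * (2 * (P / p) - / p)) with ((2 * P - 1) * p * (1 - p) / (p ^ 2 * (1 - p) * z)) by (field; lra).
  replace ((r + 1) / z * ((1 + / (1 - p)) * (P / p ^ 2) - / p ^ 2)) with ((r + 1) * ((2 - p) * P - (1 - p)) / (p ^ 2 * (1 - p) * z)) by (field; lra).
  apply div_le. assert (0 < p^2) by (apply pow_lt; lra). assert (0 < p ^ 2 * (1 - p)) by nra. nra.
  assert (0 < p^2) by (apply pow_lt; lra). assert (0 < p ^ 2 * (1 - p)) by nra. nra.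
  apply Rmult_le_compat_r. assert (0 < p^2) by (apply pow_lt; lra). assert (0 < p ^ 2 * (1 - p)) by nra. nra.
  assert ((2 * P - 1) * p * (1 - p) <= (2 * P - 1)) by (assert (0 <= 2 * P - 1) by lra; assert (p * (1 - p) <= 1) by nra; nra).
  assert (2 * P - 1 <= 2 * ((2 - p) * P - (1 - p))) by nra.
  assert (0 <= (2 - p) * P - (1 - p)) by nra.
  assert (2 * ((2 - p) * P - (1 - p)) <= (r + 1) * ((2 - p) * P - (1 - p))) by (apply Rmult_le_compat_r; lra).
  lra.
Qed.

Lemma cmpB p r z P : 0 < p < 1 -> 1 < r -> 0 < z -> 1 <= P ->
  / z * ((1 + / (1 - p)) * (P / p ^ 2) - / p ^ 2) <= (r + 1) / z * ((1 + / (1 - p)) * (P / p ^ 2) - / p ^ 2).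
Proof. intros hp hr hz hP.
  assert (0 <= (1 + / (1 - p)) * (P / p ^ 2) - / p ^ 2).
  { assert (0 < p^2) by (apply pow_lt; lra). assert (0 < / (1 - p)) by (apply Rinv_0_lt_compat; lra).
    assert (P / p ^ 2 >= / p ^ 2). { unfold Rdiv. assert (0 < / p^2) by (apply Rinv_0_lt_compat; lra). nra. }
    assert (0 <= / (1 - p) * (P / p ^ 2)) by (apply Rmult_le_pos; [lra| unfold Rdiv; apply Rmult_le_pos; [lra|left; apply Rinv_0_lt_compat; lra]]).
    nra. }
  unfold Rdiv. rewrite Rmult_assoc. rewrite <- (Rmult_1_l (/ z * _)) at 1. apply Rmult_le_compat_r.
  apply Rmult_le_pos; [left; apply Rinv_0_lt_compat; lra | auto]. lra.
Qed.

Lemma cmpC p r z P : 0 < p < 1 -> 1 < r -> 0 < z -> 1 <= P ->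
  (r + 1) / z * (2 * (P / p ^ 2) - / p ^ 2) <= (r + 1) / z * ((1 + / (1 - p)) * (P / p ^ 2) - / p ^ 2).
Proof. intros hp hr hz hP. apply Rmult_le_compat_l. apply Rdiv_le_0_compat; lra.
  assert (/ (1 - p) >= 1). { rewrite <- Rinv_1. apply Rle_ge, Rinv_le_contravar; lra. }
  assert (0 < P / p ^ 2) by (apply Rdiv_lt_0_compat; [lra| apply pow_lt; lra]).
  nra.
Qed.

Theorem lemma2p2 (r p z : R) (hr : 1 < r) (hp0 : 0 < p) (hp1 : p < 1) (hz : 1 < z) :
  let q := 1 - p in
  (forall k : nat, (1 <= k)%nat -> z <= INR k ->
     Rabs (fdiff (g_z r p z) k)
       <= / z * (2 * Rpower p (- (r + 1)) - / p)) /\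
  (forall k : nat, (2 <= k)%nat -> INR k < z ->
     Rabs (fdiff (g_z r p z) k)
       <= / z * ((1 + / q) * Rpower p (- (r + 2)) - / p ^ 2)) /\
  (Rabs (fdiff (g_z r p z) 1)
       <= (r + 1) / z * (2 * Rpower p (- (r + 2)) - / p ^ 2)) /\
  (forall k : nat, (1 <= k)%nat ->
     Rabs (fdiff (g_z r p z) k)
       <= (r + 1) / z * ((1 + / q) * Rpower p (- (r + 2)) - / p ^ 2)).
Proof.
  intros q.
  assert (hp : 0 < p < 1) by lra. assert (hq : 0 < 1 - p < 1) by lra.
  pose proof (M_eq r p hr hp) as HM.
  pose proof (M_ge1 r (1 - p) hr hq) as HM1.
  pose proof (mom1 r (1 - p) hr hq) as Hm1. replace (1 - (1 - p)) with p in Hm1 by ring.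
  pose proof (mom2 r (1 - p) hr hq) as Hm2. replace (1 - (1 - p)) with p in Hm2 by ring.
  rewrite Rpower_m1, Rpower_m2 by lra. rewrite <- HM.
  set (M := Series (uu r (1 - p))) in *.
  set (m1 := Series (fun n => INR n * uu r (1 - p) n)) in *.
  set (m2 := Series (fun n => INR n ^ 2 * uu r (1 - p) n)) in *.
  assert (P1 : forall k, (1 <= k)%nat -> z <= INR k -> Rabs (fdiff (g_z r p z) k) <= / z * (2 * (M / p) - / p)).
  { intros k hk hkz. pose proof (big_case r p z k hr hp hz hk hkz) as H. rewrite Rpower_m1, <- HM in H by lra. exact H. }
  assert (P2 : forall k, (2 <= k)%nat -> INR k < z -> Rabs (fdiff (g_z r p z) k) <= / z * ((1 + / q) * (M / p ^ 2) - / p ^ 2)).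
  { intros k hk hkz. eapply Rle_trans. apply (small_case r p z k hr hp hz ltac:(lia) hkz).
    apply (finB p (1 - p) r (INR k) z M m1 m2); try lra. apply (le_INR 2); auto. }
  assert (P3 : Rabs (fdiff (g_z r p z) 1) <= (r + 1) / z * (2 * (M / p ^ 2) - / p ^ 2)).
  { eapply Rle_trans. apply (small_case r p z 1 hr hp hz ltac:(lia) ltac:(simpl; lra)).
    replace (INR 1) with 1 by (simpl; ring).
    apply (finC p (1 - p) r z M m1 m2); try lra. }
  split; [exact P1|]. split; [exact P2|]. split; [exact P3|].
  intros k hk.
  destruct (Rle_lt_dec z (INR k)) as [H1 | H1].
  - eapply Rle_trans. apply P1; auto. apply cmpA; lra.
  - destruct (Nat.eq_dec k 1) as [->|Hk1].
    + eapply Rle_trans. apply P3. apply cmpC; lra.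
    + eapply Rle_trans. apply P2; auto; lia. apply cmpB; lra.
Qed.
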